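(* Let $F$ be an infinite field, $n=3$, and let $f,g\in\mathcal{B}_{(1,1)}$ with $f\le_{\mathcal{B}_{(1,1)}}g$. Then $g\in\langle\{f\}\cup I\rangle_{T_{\mathbb{Z}_3}}$.
   Context: $I$ is the $T_{\mathbb{Z}_3}$-ideal of graded identities of $UT_3(F)^{(-)}$ ($3\times3$ upper triangular matrices, bracket $[a,b]=ab-ba$, canonical grading with degree-$k$ component spanned by $e_{ij}$, $j-i=k$) in the free Lie algebra on variables $y_i$ (degree $0$), $z_i$ (degree $1$), $w_i$ (degree $2$). Commutators are left normed. $z_1,z_2$ are fixed distinct variables of degree $1$. $[z_1,a_1y_1,\dots,a_ny_n,z_2,b_1y_1,\dots,b_ny_n]$ denotes the commutator with $z_1$, then $y_1$ repeated $a_1$ times, …, $y_n$ repeated $a_n$ times, then $z_2$, then $y_1$ repeated $b_1$ times, …, $y_n$ repeated $b_n$ times. $\mathcal{B}_{(1,1)}$ is the set of all such commutators with $n\ge0$, $a_i,b_i\ge0$. For such $f$, $V_f=((a_1,b_1),\dots,(a_n,b_n))$. For $f,g\in\mathcal{B}_{(1,1)}$ with $V_f=((a_1,b_1),\dots,(a_n,b_n))$, $V_g=((a'_1,b'_1),\dots,(a'_m,b'_m))$, $f\le_{\mathcal{B}_{(1,1)}}g$ means there is a strictly increasing $\varphi:\{1,\dots,n\}\to\{1,\dots,m\}$ with $a_i\le a'_{\varphi(i)}$ and $b_i\le b'_{\varphi(i)}$ for all $i$. *)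

(* Defs.v *)
From HB Require Import structures.
From mathcomp Require Import all_boot all_order all_algebra.
Set Implicit Arguments. Unset Strict Implicit. Unset Printing Implicit Defensive.
Import GRing.Theory.
Local Open Scope ring_scope.

(* Variables of the free Z_3-graded Lie algebra:
   VY i = y_i (degree 0), VZ i = z_i (degree 1), VW i = w_i (degree 2). *)
Inductive var := VY of nat | VZ of nat | VW of nat.

Definition vdeg (v : var) : nat :=
  match v with VY _ => 0 | VZ _ => 1 | VW _ => 2 end.

Inductive lterm (F : Type) :=
| LVar of var
| LZero
| LAdd of lterm F & lterm F
| LScale of F & lterm F
| LBr of lterm F & lterm F.
Arguments LZero {F}.
Arguments LVar {F} v.

(* The congruence whose quotient is the free Lie algebra over F on [var]. *)
Inductive lequiv (F : fieldType) : lterm F -> lterm F -> Prop :=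
| le_refl a : lequiv a a
| le_sym a b : lequiv a b -> lequiv b a
| le_trans a b c : lequiv a b -> lequiv b c -> lequiv a c
| le_add a a' b b' : lequiv a a' -> lequiv b b' -> lequiv (LAdd a b) (LAdd a' b')
| le_scale c a a' : lequiv a a' -> lequiv (LScale c a) (LScale c a')
| le_br a a' b b' : lequiv a a' -> lequiv b b' -> lequiv (LBr a b) (LBr a' b')
| le_addA a b c : lequiv (LAdd a (LAdd b c)) (LAdd (LAdd a b) c)
| le_addC a b : lequiv (LAdd a b) (LAdd b a)
| le_add0 a : lequiv (LAdd LZero a) a
| le_addN a : lequiv (LAdd a (LScale (-1) a)) LZero
| le_scale1 a : lequiv (LScale 1 a) a
| le_scaleA c d a : lequiv (LScale c (LScale d a)) (LScale (c * d) a)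
| le_scaleDr c a b : lequiv (LScale c (LAdd a b)) (LAdd (LScale c a) (LScale c b))
| le_scaleDl c d a : lequiv (LScale (c + d) a) (LAdd (LScale c a) (LScale d a))
| le_brDl a b c : lequiv (LBr (LAdd a b) c) (LAdd (LBr a c) (LBr b c))
| le_brDr a b c : lequiv (LBr a (LAdd b c)) (LAdd (LBr a b) (LBr a c))
| le_brZl k a b : lequiv (LBr (LScale k a) b) (LScale k (LBr a b))
| le_brZr k a b : lequiv (LBr a (LScale k b)) (LScale k (LBr a b))
| le_alt a : lequiv (LBr a a) LZero
| le_jacobi a b c :
    lequiv (LAdd (LAdd (LBr (LBr a b) c) (LBr (LBr b c) a)) (LBr (LBr c a) b)) LZero.

Fixpoint lsubst (F : Type) (s : var -> lterm F) (t : lterm F) : lterm F :=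
  match t with
  | LVar v => s v
  | LZero => LZero
  | LAdd a b => LAdd (lsubst s a) (lsubst s b)
  | LScale c a => LScale c (lsubst s a)
  | LBr a b => LBr (lsubst s a) (lsubst s b)
  end.

Inductive shomog (F : Type) : nat -> lterm F -> Prop :=
| sh_var v : shomog (vdeg v) (LVar v)
| sh_zero d : (d < 3)%N -> shomog d LZero
| sh_add d a b : shomog d a -> shomog d b -> shomog d (LAdd a b)
| sh_scale d c a : shomog d a -> shomog d (LScale c a)
| sh_br d1 d2 a b : shomog d1 a -> shomog d2 b -> shomog ((d1 + d2) %% 3) (LBr a b).

Definition homog (F : fieldType) (d : nat) (t : lterm F) : Prop :=
  exists t', lequiv t t' /\ shomog d t'.

(* The graded T-ideal (T_{Z_3}-ideal) generated by a set S of elements: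
   smallest ideal containing S and stable under all graded endomorphisms. *)
Inductive Tideal (F : fieldType) (S : lterm F -> Prop) : lterm F -> Prop :=
| ti_base t : S t -> Tideal S t
| ti_equiv t t' : Tideal S t -> lequiv t t' -> Tideal S t'
| ti_zero : Tideal S LZero
| ti_add a b : Tideal S a -> Tideal S b -> Tideal S (LAdd a b)
| ti_scale c a : Tideal S a -> Tideal S (LScale c a)
| ti_brl a b : Tideal S a -> Tideal S (LBr a b)
| ti_brr a b : Tideal S b -> Tideal S (LBr a b)
| ti_subst (s : var -> lterm F) t :
    (forall v, homog (vdeg v) (s v)) -> Tideal S t -> Tideal S (lsubst s t).

(* Evaluation in UT_3(F)^(-), bracket = commutator of matrices. *)
Fixpoint evalM (F : fieldType) (phi : var -> 'M[F]_3) (t : lterm F) : 'M[F]_3 :=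
  match t with
  | LVar v => phi v
  | LZero => 0
  | LAdd a b => evalM phi a + evalM phi b
  | LScale c a => c *: evalM phi a
  | LBr a b => evalM phi a *m evalM phi b - evalM phi b *m evalM phi a
  end.

(* phi is a graded evaluation: phi v lies in the degree-(vdeg v) component of
   UT_3(F), i.e. in the span of the e_ij with j - i = vdeg v. *)
Definition graded_eval (F : fieldType) (phi : var -> 'M[F]_3) : Prop :=
  forall v (i j : 'I_3), phi v i j != 0 -> (j : nat) = (i + vdeg v)%N.

Definition graded_identity (F : fieldType) (t : lterm F) : Prop :=
  forall phi : var -> 'M[F]_3, graded_eval phi -> evalM phi t = 0.

Fixpoint yseq (k : nat) (s : seq nat) : seq var :=
  match s with
  | [::] => [::]
  | a :: s' => nseq a (VY k) ++ yseq k.+1 s'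
  end.

Definition lnorm (F : Type) (x0 : var) (xs : seq var) : lterm F :=
  foldl (fun t v => LBr t (LVar v)) (LVar x0) xs.

(* The element of B_(1,1) with V_f = V = ((a_1,b_1),...,(a_n,b_n)):
   [z_1, a_1 y_1, ..., a_n y_n, z_2, b_1 y_1, ..., b_n y_n]. *)
Definition commB (F : Type) (V : seq (nat * nat)) : lterm F :=
  lnorm F (VZ 1) (yseq 1 (unzip1 V) ++ VZ 2 :: yseq 1 (unzip2 V)).

(* The order <=_{B_(1,1)} on the vectors V_f, V_g (0-based indices). *)
Definition leB (V V' : seq (nat * nat)) : Prop :=
  exists phi : nat -> nat,
    (forall i j, (i < j)%N -> (j < size V)%N -> (phi i < phi j)%N) /\
    (forall i, (i < size V)%N ->
       [/\ (phi i < size V')%N,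
           ((nth (0, 0) V i).1 <= (nth (0, 0) V' (phi i)).1)%N &
           ((nth (0, 0) V i).2 <= (nth (0, 0) V' (phi i)).2)%N]).

Definition infinite_field (F : fieldType) : Prop :=
  forall s : seq F, exists x : F, x \notin s.

(* Main.v *)
Require Import Defs.
From mathcomp Require Import all_boot all_order all_algebra.
Set Implicit Arguments. Unset Strict Implicit. Unset Printing Implicit Defensive.
Import GRing.Theory.
Local Open Scope ring_scope.

Definition ybr (F : Type) (t : lterm F) (ys : seq var) : lterm F :=
  foldl (fun t v => LBr t (LVar v)) t ys.

Definition isY (v : var) : bool := match v with VY _ => true | _ => false end.

Lemma all_yseq k s : all isY (yseq k s).
Proof.
elim: s k => [|a s IH] k //=; rewrite all_cat IH andbT.
by elim: a => //.
Qed.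

Lemma mulD_r (F : fieldType) (M D : 'M[F]_3) i j :
  (forall k l : 'I_3, k != l -> D k l = 0) -> (M *m D) i j = M i j * D j j.
Proof.
move=> HD; rewrite mxE (bigD1 j) //= big1 ?addr0 // => k hk.
by rewrite HD ?mulr0.
Qed.

Lemma mulD_l (F : fieldType) (M D : 'M[F]_3) i j :
  (forall k l : 'I_3, k != l -> D k l = 0) -> (D *m M) i j = D i i * M i j.
Proof.
move=> HD; rewrite mxE (bigD1 i) //= big1 ?addr0 // => k hk.
by rewrite HD ?mul0r // eq_sym.
Qed.

Lemma subE (F : fieldType) (A B : 'M[F]_3) i j : (A - B) i j = A i j - B i j.
Proof. by rewrite !mxE. Qed.

Definition PY (F : fieldType) (phi : var -> 'M[F]_3) (ys : seq var) (k l : 'I_3) : F :=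
  (\prod_(v <- ys) (phi v l l - phi v k k))%R.

Lemma ybr_entry (F : fieldType) (phi : var -> 'M[F]_3) t ys i j :
  (forall n (k l : 'I_3), k != l -> phi (VY n) k l = 0) -> all isY ys ->
  evalM phi (ybr t ys) i j = (evalM phi t i j * PY phi ys i j)%R.
Proof.
move=> Hd; elim: ys t => [|v ys IH] t /=.
  by rewrite /PY big_nil mulr1.
case: v => // n /= Hys; rewrite /ybr /= -/(ybr _ _) IH // /PY big_cons /=.
rewrite subE mulD_r; last exact: Hd.
rewrite mulD_l; last exact: Hd.
by rewrite mulrA; congr (_ * _); rewrite mulrBr [phi _ i i * _]mulrC.
Qed.

Lemma commB_ybr (F : Type) V :
  commB F V = ybr (LBr (ybr (LVar (VZ 1)) (yseq 1 (unzip1 V))) (LVar (VZ 2)))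
                  (yseq 1 (unzip2 V)).
Proof. by rewrite /commB /lnorm /ybr foldl_cat. Qed.

Definition mxZ (F : fieldType) (M N : 'M[F]_3) := (M *m N - N *m M)%R.

Lemma evalB (F : fieldType) (phi : var -> 'M[F]_3) V i j :
  (forall n (k l : 'I_3), k != l -> phi (VY n) k l = 0) ->
  evalM phi (commB F V) i j =
  (mxZ (\matrix_(k, l) (phi (VZ 1) k l * PY phi (yseq 1 (unzip1 V)) k l))
       (phi (VZ 2)) i j * PY phi (yseq 1 (unzip2 V)) i j)%R.
Proof.
move=> Hd; rewrite commB_ybr ybr_entry ?all_yseq //; congr (_ * _).
rewrite /mxZ /=.
have -> : evalM phi (ybr (LVar (VZ 1)) (yseq 1 (unzip1 V))) =
  \matrix_(k, l) (phi (VZ 1) k l * PY phi (yseq 1 (unzip1 V)) k l).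
  by apply/matrixP => k l; rewrite mxE ybr_entry ?all_yseq.
by [].
Qed.

Lemma prod_yseq (R : comPzRingType) (Gv : var -> R) k s :
  (\prod_(v <- yseq k s) Gv v = \prod_(i < size s) Gv (VY (k + i)) ^+ nth 0%N s i)%R.
Proof.
elim: s k => [|a s IH] k /=; first by rewrite big_nil big_ord0.
rewrite big_cat IH big_ord_recl /= addn0; congr (_ * _)%R.
- elim: a => [|a IHa]; first by rewrite big_nil expr0.
  by rewrite /= big_cons IHa exprS.
- by apply: eq_bigr => i _; rewrite addSnnS.
Qed.

Definition Ecnt (ph : nat -> nat) (s : seq nat) (j : nat) : nat :=
  \sum_(i < size s | ph i == j) nth 0%N s i.

Definition defic (ph : nat -> nat) (s s' : seq nat) : seq nat :=
  mkseq (fun j => nth 0%N s' j - Ecnt ph s j)%N (size s').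

Lemma coreC (R : comPzRingType) (G : nat -> R) (s s' : seq nat) (ph : nat -> nat) :
  (forall i j, (i < j)%N -> (j < size s)%N -> (ph i < ph j)%N) ->
  (forall i, (i < size s)%N -> (ph i < size s')%N /\ (nth 0 s i <= nth 0 s' (ph i))%N) ->
  ((\prod_(j < size s') G j ^+ (nth 0%N s' j - Ecnt ph s j)) *
   (\prod_(i < size s) G (ph i) ^+ nth 0%N s i)
  = \prod_(j < size s') G j ^+ nth 0%N s' j)%R.
Proof.
move=> Hm Hb.
have inj : forall i k, (i < size s)%N -> (k < size s)%N -> ph i = ph k -> i = k.
  move=> i k hi hk e; case: (ltngtP i k) => // h.
    by have := Hm _ _ h hk; rewrite e ltnn.
  by have := Hm _ _ h hi; rewrite e ltnn.
have HE : forall j : 'I_(size s'), (Ecnt ph s j <= nth 0 s' j)%N.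
  move=> j; rewrite /Ecnt.
  case: (pickP (fun i : 'I_(size s) => ph i == j)) => [i0 /eqP hi0|none].
  - rewrite (bigD1 i0) /=; last by rewrite hi0.
    rewrite big1 ?addn0; first by rewrite -hi0; case: (Hb _ (ltn_ord i0)).
    move=> i /andP [/eqP hi hne].
    have e : val i = val i0 by apply: inj; [exact: ltn_ord | exact: ltn_ord | rewrite hi hi0].
    by rewrite (val_inj e) eqxx in hne.
  - by rewrite big_pred0.
have Hsw : (\prod_(i < size s) G (ph i) ^+ nth 0%N s i =
            \prod_(j < size s') G j ^+ Ecnt ph s j)%R.
  transitivity (\prod_(i < size s) \prod_(j < size s')
                  (if ph i == j then G j ^+ nth 0%N s i else 1))%R.
    apply: eq_bigr => i _; rewrite -big_mkcond /=.
    have hlt := (Hb _ (ltn_ord i)).1.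
    by rewrite (big_pred1 (Ordinal hlt)).
  rewrite exchange_big /=; apply: eq_bigr => j _.
  by rewrite -big_mkcond /= /Ecnt prodrXr.
rewrite Hsw -big_split /=; apply: eq_bigr => j _.
by rewrite -exprD subnK.
Qed.

Lemma evalM_subst (F : fieldType) (phi : var -> 'M[F]_3) s t :
  evalM phi (lsubst s t) = evalM (fun v => evalM phi (s v)) t.
Proof. by elim: t => //= [a IHa b IHb|c a IHa|a IHa b IHb]; rewrite ?IHa ?IHb. Qed.

Lemma ti_ybr (F : fieldType) (S : lterm F -> Prop) t ys :
  Tideal S t -> Tideal S (ybr t ys).
Proof. elim: ys t => [|v ys IH] t //= Ht; apply: IH; exact: ti_brl. Qed.

Lemma sh_ybr (F : Type) (t : lterm F) ys : shomog 1 t -> all isY ys -> shomog 1 (ybr t ys).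
Proof.
elim: ys t => [|v ys IH] t //= Ht; case: v => // n /= Hys; apply: IH => //.
exact: (sh_br Ht (sh_var F (VY n))).
Qed.

Local Close Scope ring_scope.

Theorem mainTheorem7 (F : fieldType) (HF : infinite_field F)
  (Vf Vg : seq (nat * nat)) :
  leB Vf Vg ->
  Tideal (fun t : lterm F => t = commB F Vf \/ graded_identity t) (commB F Vg).
Proof.
case=> ph [Hm Hb].
pose S := (fun t : lterm F => t = commB F Vf \/ graded_identity t).
pose sg := fun v : var => match v return lterm F with
  | VY i => LVar (VY (ph i.-1).+1)
  | VZ k => if k == 1%N then ybr (LVar (VZ 1)) (yseq 1 (defic ph (unzip1 Vf) (unzip1 Vg)))
            else LVar v
  | VW _ => LVar v end.
pose h := ybr (lsubst sg (commB F Vf)) (yseq 1 (defic ph (unzip2 Vf) (unzip2 Vg))).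
have Hh : Tideal S h.
  apply: ti_ybr; apply: ti_subst; last by apply: ti_base; left.
  case=> [n|k|n].
  - exists (sg (VY n)); split; first exact: le_refl.
    exact: (sh_var F (VY (ph n.-1).+1)).
  - exists (sg (VZ k)); split; first exact: le_refl.
    rewrite /sg /=; case: ifP => [_|_]; last exact: (sh_var F (VZ _)).
    apply: sh_ybr; [exact: (sh_var F (VZ 1)) | exact: all_yseq].
  - exists (sg (VW n)); split; first exact: le_refl.
    exact: (sh_var F (VW _)).
have Hsz1 : size (unzip1 Vf) = size Vf by rewrite size_map.
have Hsz2 : size (unzip2 Vf) = size Vf by rewrite size_map.
have Hm1 : forall i j, (i < j)%N -> (j < size (unzip1 Vf))%N -> (ph i < ph j)%N.
  by move=> i j; rewrite Hsz1; apply: Hm.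
have Hm2 : forall i j, (i < j)%N -> (j < size (unzip2 Vf))%N -> (ph i < ph j)%N.
  by move=> i j; rewrite Hsz2; apply: Hm.
have Hb1 : forall i, (i < size (unzip1 Vf))%N ->
    (ph i < size (unzip1 Vg))%N /\ (nth 0 (unzip1 Vf) i <= nth 0 (unzip1 Vg) (ph i))%N.
  move=> i; rewrite Hsz1 size_map => hi; case: (Hb _ hi) => h1 h2 h3.
  by rewrite !(nth_map (0%N, 0%N)).
have Hb2 : forall i, (i < size (unzip2 Vf))%N ->
    (ph i < size (unzip2 Vg))%N /\ (nth 0 (unzip2 Vf) i <= nth 0 (unzip2 Vg) (ph i))%N.
  move=> i; rewrite Hsz2 size_map => hi; case: (Hb _ hi) => h1 h2 h3.
  by rewrite !(nth_map (0%N, 0%N)).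
have Heq : forall phi, graded_eval phi -> evalM phi (commB F Vg) = evalM phi h.
  move=> phi gp.
  have Hd : forall n (k l : 'I_3), k != l -> phi (VY n) k l = 0%R.
    move=> n k l kl; case: (eqVneq (phi (VY n) k l) 0%R) => // /gp /=.
    by rewrite addn0 => /val_inj e; rewrite e eqxx in kl.
  pose phi' := fun v => evalM phi (sg v).
  have Hd' : forall n (k l : 'I_3), k != l -> phi' (VY n) k l = 0%R.
    by move=> n k l kl; apply: Hd.
  pose G := fun (i j : 'I_3) (n : nat) => (phi (VY n.+1) j j - phi (VY n.+1) i i)%R.
  have PYg : forall s i j, PY phi (yseq 1 s) i j =
      (\prod_(k < size s) G i j k ^+ nth 0%N s k)%R.
    by move=> s i j; rewrite /PY prod_yseq.
  have PYf : forall s i j, PY phi' (yseq 1 s) i j =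
      (\prod_(k < size s) G i j (ph k) ^+ nth 0%N s k)%R.
    by move=> s i j; rewrite /PY prod_yseq.
  have PYd : forall s s' i j, PY phi (yseq 1 (defic ph s s')) i j =
      (\prod_(k < size s') G i j k ^+ (nth 0%N s' k - Ecnt ph s k))%R.
    move=> s s' i j; rewrite PYg /defic size_mkseq.
    by apply: eq_bigr => k _; rewrite nth_mkseq.
  apply/matrixP => i j.
  rewrite evalB // /h ybr_entry ?all_yseq // evalM_subst (@evalB F phi' Vf i j Hd').
  have Xeq : (\matrix_(k, l) (phi' (VZ 1) k l * PY phi' (yseq 1 (unzip1 Vf)) k l))%R =
             (\matrix_(k, l) (phi (VZ 1) k l * PY phi (yseq 1 (unzip1 Vg)) k l))%R.
    apply/matrixP => k l; rewrite !mxE.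
    have e1 : phi' (VZ 1) k l =
      evalM phi (ybr (LVar (VZ 1)) (yseq 1 (defic ph (unzip1 Vf) (unzip1 Vg)))) k l by [].
    rewrite e1 ybr_entry ?all_yseq //= PYd PYf PYg -mulrA coreC //.
  rewrite Xeq -mulrA; congr (_ * _)%R.
  by rewrite PYd PYf PYg mulrC coreC.
apply: (@ti_equiv F S (LAdd h (LAdd (commB F Vg) (LScale (-1)%R h)))).
  apply: ti_add Hh (ti_base _); right => phi gp /=.
  by rewrite Heq // scaleN1r subrr.
set g := commB F Vg; set X := LScale (-1)%R h.
apply: le_trans (le_addA _ _ _) _.
apply: le_trans (le_add (le_addC h g) (le_refl X)) _.
apply: le_trans (le_sym (le_addA _ _ _)) _.
apply: le_trans (le_add (le_refl g) (le_addN h)) _.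
apply: le_trans (le_addC _ _) _.
exact: le_add0.
Qed.
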